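(* Let $\Sigma$ be a finite alphabet. There exist a closed term $\mathtt{lift}_\Sigma \in \Lambda_{\mathtt{det}}$ and constants $A,B$ (depending only on $\Sigma$) such that for every value $k$ and every string $s \in \Sigma^*$, $$\mathtt{lift}_\Sigma\; k\; \ulcorner s\urcorner^{\Sigma^*} \to_{\mathtt{det}}^{n} k\; \ulcorner s\urcorner^{\Sigma_\Box^*}$$ for some $n$ with $|s| \le n \le A|s| + B$.
   Context: The deterministic $\lambda$-calculus $\Lambda_{\mathtt{det}}$ has terms and values given by the grammar: terms $t ::= v \mid t\,v$; values $v ::= \lambda x.t \mid x$. Evaluation contexts are $E ::= [\cdot] \mid E\,v$ (they never enter abstractions). The reduction $\to_{\mathtt{det}}$ is the closure under evaluation contexts of $(\lambda x.t)\,s \mapsto t\{x:=s\}$; $t \to_{\mathtt{det}}^n s$ means $t$ reduces to $s$ in exactly $n$ steps. Application associates to the left. Scott encoding: for a finite alphabet $\Sigma = \{a_1,\dots,a_n\}$ with a fixed total order (the given indexing), $\ulcorner a_i\urcorner^{\Sigma} := \lambda x_1.\cdots.\lambda x_n.x_i$, and strings are encoded by $\ulcorner \varepsilon\urcorner^{\Sigma^*} := \lambda x_1.\cdots.\lambda x_n.\lambda y.y$ and $\ulcorner a_i r\urcorner^{\Sigma^*} := \lambda x_1.\cdots.\lambda x_n.\lambda y.\,x_i\,\ulcorner r\urcorner^{\Sigma^*}$. The extended alphabet $\Sigma_\Box := \Sigma \cup \{\Box\}$, where $\Box \notin \Sigma$ is the blank symbol, is ordered as $a_1,\dots,a_n,\Box$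 (blank last); encodings with respect to $\Sigma_\Box$ use this order. $|s|$ is the length of $s$. *)

(* Defs.v *)
From mathcomp Require Import all_boot.
Set Implicit Arguments. Unset Strict Implicit. Unset Printing Implicit Defensive.

Inductive tm : Type :=
| Val : value -> tm
| App : tm -> value -> tm
with value : Type :=
| Var : nat -> value
| Lam : tm -> value.

Fixpoint shift_tm (c : nat) (t : tm) : tm :=
  match t with
  | Val v => Val (shift_val c v)
  | App t v => App (shift_tm c t) (shift_val c v)
  end
with shift_val (c : nat) (v : value) : value :=
  match v with
  | Var x => if c <= x then Var x.+1 else Var x
  | Lam t => Lam (shift_tm c.+1 t)
  end.

(* t{j := s}, removing binder j (free variables above j are decremented) *)
Fixpoint subst_tm (j : nat) (s : value) (t : tm) : tm :=
  match t with
  | Val v => Val (subst_val j s v)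
  | App t v => App (subst_tm j s t) (subst_val j s v)
  end
with subst_val (j : nat) (s : value) (v : value) : value :=
  match v with
  | Var x => if x == j then s else if j < x then Var x.-1 else Var x
  | Lam t => Lam (subst_tm j.+1 (shift_val 0 s) t)
  end.

Fixpoint closed_tm (d : nat) (t : tm) : bool :=
  match t with
  | Val v => closed_val d v
  | App t v => closed_tm d t && closed_val d v
  end
with closed_val (d : nat) (v : value) : bool :=
  match v with
  | Var x => x < d
  | Lam t => closed_tm d.+1 t
  end.

Inductive step_det : tm -> tm -> Prop :=
| step_beta (t : tm) (s : value) : step_det (App (Val (Lam t)) s) (subst_tm 0 s t)
| step_ctx (t t' : tm) (v : value) : step_det t t' -> step_det (App t v) (App t' v).

Inductive steps_det : nat -> tm -> tm -> Prop :=
| steps_refl (t : tm) : steps_det 0 t t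
| steps_cons (n : nat) (t u w : tm) :
    step_det t u -> steps_det n u w -> steps_det n.+1 t w.

Fixpoint lams (k : nat) (t : tm) : tm :=
  match k with 0 => t | k.+1 => Val (Lam (lams k t)) end.

(* Scott encoding of a string over the alphabet {a_0,...,a_(m-1)} (0-based
   letter indices): eps = \x_0...\x_(m-1).\y.y,
   a_i r = \x_0...\x_(m-1).\y. x_i [r].
   Under the m+1 binders, x_i has de Bruijn index m - i. *)
Fixpoint enc_str (m : nat) (s : seq nat) : value :=
  match s with
  | [::] => Lam (lams m (Val (Var 0)))
  | i :: r => Lam (lams m (App (Val (Var (m - i))) (enc_str m r)))
  end.

(* Sigma = 'I_n (letters a_1..a_n in their given order); Sigma_Box = 'I_n.+1,
   blank being the last letter n. *)
Definition enc_Sigma (n : nat) (s : seq 'I_n) : value := enc_str n (map (@nat_of_ord n) s).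
Definition enc_SigmaBox (n : nat) (s : seq 'I_n) : value := enc_str n.+1 (map (@nat_of_ord n) s).

(* Main.v *)
Require Import Defs.
From mathcomp Require Import all_boot.
From mathcomp Require Import zify.
Set Implicit Arguments. Unset Strict Implicit. Unset Printing Implicit Defensive.

Scheme tm_ind2 := Induction for tm Sort Prop
 with value_ind2 := Induction for value Sort Prop.
Combined Scheme tmv_ind from tm_ind2, value_ind2.

Lemma closed_subst_all :
  (forall t d j a, closed_tm d t -> d <= j -> subst_tm j a t = t) /\
  (forall v d j a, closed_val d v -> d <= j -> subst_val j a v = v).
Proof.
apply (@tmv_ind (fun t : tm => forall d j a, closed_tm d t -> d <= j -> subst_tm j a t = t)
  (fun v : value => forall d j a, closed_val d v -> d <= j -> subst_val j a v = v)).
all: try (move=> v IH d j a /= H1 H2; by rewrite (IH d)).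
all: try (move=> t IH v IHv d j a /= /andP[H1 H3] H2; by rewrite (IH d) // (IHv d)).
all: try (move=> x d j a /= H1 H2; have -> : (x == j) = false by apply/negbTE; rewrite neq_ltn (leq_trans H1 H2)).
all: try (by have -> : (j < x) = false by apply/negbTE; rewrite -leqNgt ltnW // (leq_trans H1 H2)).
all: move=> t IH d j a /= H1 H2; by rewrite (IH d.+1).
Qed.

Lemma closed_shift_all :
  (forall t d c, closed_tm d t -> d <= c -> shift_tm c t = t) /\
  (forall v d c, closed_val d v -> d <= c -> shift_val c v = v).
Proof.
apply (@tmv_ind (fun t : tm => forall d c, closed_tm d t -> d <= c -> shift_tm c t = t)
  (fun v : value => forall d c, closed_val d v -> d <= c -> shift_val c v = v)).
all: try (move=> v IH d c /= H1 H2; by rewrite (IH d)).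
all: try (move=> t IH v IHv d c /= /andP[H1 H3] H2; by rewrite (IH d) // (IHv d)).
all: try (move=> x d c /= H1 H2; by rewrite leqNgt (leq_trans H1 H2)).
all: move=> t IH d c /= H1 H2; by rewrite (IH d.+1).
Qed.

Lemma subst_shift_all :
  (forall t j w, subst_tm j w (shift_tm j t) = t) /\
  (forall v j w, subst_val j w (shift_val j v) = v).
Proof.
apply (@tmv_ind (fun t : tm => forall j w, subst_tm j w (shift_tm j t) = t)
  (fun v : value => forall j w, subst_val j w (shift_val j v) = v)).
all: try (move=> v IH j w /=; by rewrite IH).
all: try (move=> t IH v IHv j w /=; by rewrite IH IHv).
all: try (move=> t IH j w /=; by rewrite IH).
move=> x j w /=. case: (leqP j x) => H /=.
  have -> : (x.+1 == j) = false by apply/negbTE; rewrite neq_ltn ltnS H orbT.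
  by rewrite ltnS H.
have -> : (x == j) = false by apply/negbTE; rewrite neq_ltn H.
by rewrite ltnNge ltnW.
Qed.

Definition closed_subst_tm := proj1 closed_subst_all.
Definition closed_subst_val := proj2 closed_subst_all.
Definition closed_shift_val := proj2 closed_shift_all.
Definition subst_shift_val := proj2 subst_shift_all.

Lemma closed_mono_all :
  (forall t d d', closed_tm d t -> d <= d' -> closed_tm d' t) /\
  (forall v d d', closed_val d v -> d <= d' -> closed_val d' v).
Proof.
apply (@tmv_ind (fun t : tm => forall d d', closed_tm d t -> d <= d' -> closed_tm d' t)
  (fun v : value => forall d d', closed_val d v -> d <= d' -> closed_val d' v)).
- move=> v IH d d' /= H1 H2; exact: IH H1 H2.
- move=> t IH v IHv d d' /= /andP[H1 H3] H2; by rewrite (IH d) // (IHv d).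
- move=> x d d' /= H1 H2; exact: leq_trans H1 H2.
- move=> t IH d d' /= H1 H2; exact: IH H1 _.
Qed.

Definition apps (t : tm) (vs : seq value) : tm := foldl App t vs.

Lemma subst_apps j a t vs :
  subst_tm j a (apps t vs) = apps (subst_tm j a t) (map (subst_val j a) vs).
Proof. by elim: vs t => [|v vs IH] t //=; rewrite IH. Qed.

Lemma closed_apps d t vs :
  closed_tm d (apps t vs) = closed_tm d t && all (closed_val d) vs.
Proof. elim: vs t => [|v vs IH] t /=; first by rewrite andbT. by rewrite IH /= andbA. Qed.

Lemma step_apps t t' vs : step_det t t' -> step_det (apps t vs) (apps t' vs).
Proof. elim: vs t t' => [|v vs IH] t t' H //=. apply: IH. exact: step_ctx. Qed.

Lemma steps_apps m t t' vs : steps_det m t t' -> steps_det m (apps t vs) (apps t' vs).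
Proof. elim=> [u|k a b c H _ IH]; first exact: steps_refl. apply: steps_cons IH. exact: step_apps. Qed.

Lemma steps_trans m p a b c : steps_det m a b -> steps_det p b c -> steps_det (m + p) a c.
Proof. elim=> [u|k x y z H _ IH] // Hp. rewrite addSn. exact: steps_cons (IH Hp). Qed.

Lemma step1 t u : step_det t u -> steps_det 1 t u.
Proof. move=> H; apply: steps_cons H (steps_refl _). Qed.

Lemma closed_lams d m t : closed_tm d (lams m t) = closed_tm (d + m) t.
Proof. elim: m d => [|m IH] d /=; first by rewrite addn0. by rewrite IH addnS. Qed.

Lemma subst_lams j a m t : closed_val 0 a ->
  subst_tm j a (lams m t) = lams m (subst_tm (j + m) a t).
Proof.
move=> Ha; elim: m j => [|m IH] j /=; first by rewrite addn0.
rewrite (closed_shift_val Ha) // IH addSnnS //.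
Qed.

Fixpoint suball (args : seq value) (t : tm) : tm :=
  match args with [::] => t | a :: rest => suball rest (subst_tm (size rest) a t) end.

Lemma apps_lams args t : all (closed_val 0) args ->
  steps_det (size args) (apps (lams (size args) t) args) (suball args t).
Proof.
elim: args t => [|a rest IH] t /=; first by move=> _; exact: steps_refl.
move=> /andP[Ha Hr]. apply: steps_cons; first by apply: step_apps; apply: step_beta.
rewrite subst_lams // add0n. exact: IH.
Qed.

Lemma sub_all_closed args t : closed_tm 0 t -> suball args t = t.
Proof. elim: args t => [|a rest IH] t //= H. by rewrite (closed_subst_tm _ H) // IH. Qed.

Lemma sub_all_App args t v : closed_val 0 v -> suball args (App t v) = App (suball args t) v.
Proof. move=> Hv; elim: args t => [|a rest IH] t //=. by rewrite (closed_subst_val _ Hv) // IH. Qed.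

Lemma sub_all_Var args p : all (closed_val 0) args -> p < size args ->
  suball args (Val (Var p)) = Val (nth (Var 0) args (size args - 1 - p)).
Proof.
elim: args => [|a rest IH] //= /andP[Ha Hr] Hp.
case: eqP => [->|Hne].
  rewrite sub_all_closed //= subSS subn0 subnn //.
have Hpr : p < size rest by rewrite ltn_neqAle; apply/andP; split; [apply/eqP|rewrite -ltnS].
rewrite ltnNge ltnW // IH // subSS subn0.
have -> : size rest - p = (size rest - 1 - p).+1.
  by move: Hpr; clear; lia.
by [].
Qed.

Lemma closed_enc m s : closed_val 0 (enc_str m s).
Proof.
elim: s => [|i r IH] /=; rewrite closed_lams //= andbC (closed_mono_all.2 _ _ _ IH) // ltnS leq_subr.
by [].
Qed.

Section C.
Variable n : nat.
Definition cv (i : nat) := Lam (lams n.+1 (App (Val (Var (n.+1 - i))) (Var n.+2))).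
Definition Kt (i : nat) := Lam (App (Val (Var 1)) (cv i)).
Definition Bv (i : nat) := Lam (Val (Lam (Val (Lam (apps (Val (Var 1)) [:: Var 1; Kt i; Var 2]))))).
Definition Ev := Lam (Val (Lam (App (Val (Var 0)) (enc_str n.+1 [::])))).
Definition Bs := map Bv (iota 0 n).
Definition Gv := Lam (Val (Lam (Val (Lam (apps (Val (Var 0)) (Bs ++ [:: Ev; Var 2; Var 1])))))).
End C.
Arguments cv : simpl never.
Arguments Kt : simpl never.
Arguments Bv : simpl never.
Arguments Ev : simpl never.
Arguments Bs : simpl never.
Arguments Gv : simpl never.

Lemma closed_cv n i : closed_val 1 (cv n i).
Proof. rewrite /cv /= closed_lams /=; apply/andP; split; lia. Qed.
Lemma closed_Kt n i : closed_val 1 (Kt n i).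
Proof. rewrite /Kt /=. exact: (closed_mono_all.2 _ _ _ (closed_cv n i)). Qed.
Lemma closed_Bv n i : closed_val 0 (Bv n i).
Proof. rewrite /Bv /= ?closed_lams /= ?andbT; repeat (apply/andP; split); lia. Qed.
Lemma closed_Ev n : closed_val 0 (Ev n).
Proof. rewrite /Ev /= ?closed_lams /= ?andbT; repeat (apply/andP; split); lia. Qed.
Lemma closed_Bs n d : all (closed_val d) (Bs n).
Proof. rewrite /Bs all_map; apply/allP => i _ /=. exact: (closed_mono_all.2 _ _ _ (closed_Bv n i)). Qed.
Lemma closed_Gv n : closed_val 0 (Gv n).
Proof.
rewrite /Gv /= closed_apps /= all_cat closed_Bs /= closed_lams. by [].
Qed.

Lemma map_closed j a vs : all (closed_val 0) vs -> map (subst_val j a) vs = vs.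
Proof. elim: vs => [|v vs IH] //= /andP[H1 H2]. by rewrite (closed_subst_val _ H1) // IH. Qed.

Lemma beta_apps t a rest u : subst_tm 0 a t = u ->
  step_det (apps (App (Val (Lam t)) a) rest) (apps u rest).
Proof. move=> <-; apply: step_apps; exact: step_beta. Qed.

Lemma beta_eq t a u : subst_tm 0 a t = u -> step_det (App (Val (Lam t)) a) u.
Proof. move=> <-; exact: step_beta. Qed.

Lemma apps_cat t xs ys : apps t (xs ++ ys) = apps (apps t xs) ys.
Proof. by rewrite /apps foldl_cat. Qed.

Lemma sV j a v : subst_tm j a (Val v) = Val (subst_val j a v). Proof. by []. Qed.
Lemma sL j a t : subst_val j a (Lam t) = Lam (subst_tm j.+1 (shift_val 0 a) t). Proof. by []. Qed.
Lemma sA j a t v : subst_tm j a (App t v) = App (subst_tm j a t) (subst_val j a v). Proof. by []. Qed.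
Lemma sX j a x : subst_val j a (Var x) = if x == j then a else if j < x then Var x.-1 else Var x.
Proof. by []. Qed.

Lemma Gv_eq n : Gv n = Lam (Val (Lam (Val (Lam (apps (Val (Var 0)) (Bs n ++ [:: Ev n; Var 2; Var 1])))))).
Proof. by []. Qed.
Lemma Ev_eq n : Ev n = Lam (Val (Lam (App (Val (Var 0)) (enc_str n.+1 [::])))).
Proof. by []. Qed.
Lemma Bv_eq n i : Bv n i = Lam (Val (Lam (Val (Lam (apps (Val (Var 1)) [:: Var 1; Kt n i; Var 2]))))).
Proof. by []. Qed.
Lemma Kt_eq n i : Kt n i = Lam (App (Val (Var 1)) (cv n i)).
Proof. by []. Qed.
Lemma cv_eq n i : cv n i = Lam (lams n.+1 (App (Val (Var (n.+1 - i))) (Var n.+2))).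
Proof. by []. Qed.
Lemma apps_cons t v vs : apps t (v :: vs) = apps (App t v) vs. Proof. by []. Qed.
Lemma Bs_eq n : Bs n = map (Bv n) (iota 0 n). Proof. by []. Qed.
Global Opaque cv Kt Bv Ev Bs Gv.

Lemma start n k w : closed_val 0 w ->
  steps_det 3 (apps (Val (Gv n)) [:: Gv n; k; w]) (apps (Val w) (Bs n ++ [:: Ev n; Gv n; k])).
Proof.
move=> Hw.
rewrite {1}Gv_eq.
apply: (steps_cons (u := apps (Val (Lam (Val (Lam (apps (Val (Var 0)) (Bs n ++ [:: Ev n; Gv n; Var 1])))))) [:: k; w])).
  rewrite apps_cons; apply: beta_apps => /=.
  rewrite !(closed_shift_val (closed_Gv n)) // subst_apps map_cat map_closed ?closed_Bs //=.
  by rewrite (closed_subst_val _ (closed_Ev n)).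
apply: (steps_cons (u := apps (Val (Lam (apps (Val (Var 0)) (Bs n ++ [:: Ev n; Gv n; shift_val 0 k])))) [:: w])).
  rewrite apps_cons; apply: beta_apps => /=.
  rewrite subst_apps map_cat map_closed ?closed_Bs //= (closed_subst_val _ (closed_Ev n)) //.
  by rewrite (closed_subst_val _ (closed_Gv n)).
apply: step1; rewrite apps_cons; apply: beta_apps.
rewrite subst_apps map_cat map_closed ?closed_Bs //= (closed_subst_val _ (closed_Ev n)) //.
by rewrite (closed_subst_val _ (closed_Gv n)) // subst_shift_val.
Qed.

Lemma size_Bs n : size (Bs n) = n.
Proof. by rewrite Bs_eq size_map size_iota. Qed.

Lemma nth_BsE n j : j <= n ->
  nth (Var 0) (Bs n ++ [:: Ev n]) j = if j < n then Bv n j else Ev n.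
Proof.
move=> H; rewrite nth_cat size_Bs; case: ltnP => H2.
  by rewrite Bs_eq (nth_map 0) ?size_iota // nth_iota.
by have -> : j - n = 0 by lia.
Qed.

Lemma closed_BsE n : all (closed_val 0) (Bs n ++ [:: Ev n]).
Proof. by rewrite all_cat closed_Bs /= closed_Ev. Qed.

Lemma run_str n t rest : steps_det n.+1 (apps (lams n.+1 t) (Bs n ++ Ev n :: rest))
   (apps (suball (Bs n ++ [:: Ev n]) t) rest).
Proof.
have -> : Bs n ++ Ev n :: rest = (Bs n ++ [:: Ev n]) ++ rest by rewrite -catA.
rewrite apps_cat; apply: steps_apps.
have Hs : size (Bs n ++ [:: Ev n]) = n.+1 by rewrite size_cat size_Bs addn1.
rewrite -Hs; apply: apps_lams. exact: closed_BsE.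
Qed.

Lemma key n (s : seq 'I_n) k :
  steps_det ((n+8) * size s + (n+6)) (apps (Val (Gv n)) [:: Gv n; k; enc_str n (map val s)])
     (App (Val k) (enc_str n.+1 (map val s))).
Proof.
elim: s k => [|i r IH] k.
  rewrite muln0 add0n.
  have -> : n + 6 = 3 + (n.+1 + 2) by lia.
  apply: steps_trans; first by apply: start; exact: closed_enc.
  apply: steps_trans; first by apply: (run_str n (Val (Var 0))).
  rewrite sub_all_Var ?closed_BsE ?size_cat ?size_Bs ?addn1 // subn1 /= subn0 nth_BsE // ltnn.
  rewrite Ev_eq.
  apply: steps_cons; first by apply: step_ctx; apply: step_beta.
  apply: step1. rewrite sV sL sA sV (closed_subst_val _ (closed_enc _ _)) // sX /=.
  apply: beta_eq. by rewrite sA sV sX (closed_subst_val k (closed_enc n.+1 [::])) //. set er := enc_str n [seq \val i | i <- r].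
set eB := enc_str n.+1 [seq \val i | i <- r].
set K' := Lam (App (Val (shift_val 0 k)) (cv n i)).
have Her : closed_val 0 er by exact: closed_enc.
have HeB : closed_val 0 eB by exact: closed_enc.
have Hi := ltn_ord i.
have -> : (n + 8) * size (i :: r) + (n + 6) = 3 + (n.+1 + (3 + (((n+8)*size r + (n+6)) + 1))).
  rewrite /= mulnS. set X := (n+8) * size r. lia.
apply: steps_trans; first by apply: start; exact: closed_enc.
have -> : Val (enc_str n [seq \val i | i <- i :: r]) = lams n.+1 (App (Val (Var (n - i))) er) by [].
apply: steps_trans; first by apply: run_str.
rewrite sub_all_App // sub_all_Var ?closed_BsE ?size_cat ?size_Bs ?addn1; last by lia.
have -> : n.+1 - 1 - (n - i) = i by lia.
rewrite nth_BsE ?Hi; last by lia.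
apply: steps_trans (_ : steps_det 3 _ (apps (Val (Gv n)) [:: Gv n; K'; er])) _.
  rewrite Bv_eq.
  apply: (steps_cons (u := apps (Val (Lam (Val (Lam (apps (Val (Var 1)) [:: Var 1; Kt n i; er]))))) [:: Gv n; k])).
    apply: beta_apps. rewrite sV sL sV sL !(closed_shift_val Her) // subst_apps /=.
    by rewrite (closed_subst_val _ (closed_Kt n i)).
  apply: (steps_cons (u := apps (Val (Lam (apps (Val (Gv n)) [:: Gv n; Kt n i; er]))) [:: k])).
    rewrite apps_cons; apply: beta_apps. rewrite sV sL subst_apps /=.
    by rewrite !(closed_shift_val (closed_Gv n)) // (closed_subst_val _ (closed_Kt n i)) // (closed_subst_val _ Her).
  apply: step1; apply: beta_eq.
  rewrite subst_apps /= (closed_subst_val _ (closed_Gv n)) // (closed_subst_val _ Her) //.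
  rewrite Kt_eq sL sA sV sX /= (closed_subst_val _ (closed_cv n i)) //.
rewrite -addn1. apply: steps_trans; first by apply: IH.
apply: step1; apply: beta_eq.
rewrite sA sV subst_shift_val cv_eq sL subst_lams ?(closed_shift_val HeB) //.
rewrite sA sV !sX add1n eqxx.
have -> : (n.+1 - i == n.+2) = false by apply/eqP; lia.
by have -> : (n.+2 < n.+1 - i) = false by apply/negbTE; lia.
by [].
Qed.

Unset Implicit Arguments.
Theorem mainTheorem3 (n : nat) :
  exists lift : tm, closed_tm 0 lift /\
  exists A B : nat, forall (k : value) (s : seq 'I_n),
    exists m : nat, size s <= m <= A * size s + B /\
      steps_det m (App (App lift k) (enc_Sigma s)) (App (Val k) (enc_SigmaBox s)).
Proof.
exists (App (Val (Gv n)) (Gv n)); split.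
  by rewrite /= (closed_Gv n).
exists (n + 8), (n + 6) => k s.
exists ((n + 8) * size s + (n + 6)); split.
  apply/andP; split => //. set X := size s. nia.
exact: key.
Qed.
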